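(* Let $K$ be a flag simplicial complex, let $\succ$ be a hereditary ordering of $K$, and let $r$ be a positive integer. Suppose that for any two simplices $\sigma,\tau\in K$ with $\dim\sigma=\dim\tau=r$ and $\mu(\sigma)=\mu(\tau)$ we have $\sigma\cup\tau\in K$. Then $K$ collapses on a subcomplex of dimension less than $r$.
   Context: $K$ is a finite simplicial complex (family of subsets of a finite vertex set containing $\emptyset$, closed under subsets); $\dim\sigma=|\sigma|-1$. $K$ is flag if any set of vertices pairwise joined by edges of $K$ is a simplex of $K$. For a strict total ordering $\succ$ of $K$ and non-empty $\sigma$, $\mu(\sigma)$ is the $\succ$-largest facet (codimension-one face) of $\sigma$; $\succ$ is hereditary if $\sigma\succ\tau$ whenever $\dim\sigma>\dim\tau$, and $\sigma\succ\tau$ whenever $\mu(\sigma)\succ\mu(\tau)$. A pair of non-empty simplices $(\sigma,\tau)$ is a free pair if $\tau$ is a facet of $\sigma$ and $K\setminus\{\sigma,\tau\}$ is a simplicial complex; removing it is an elementary collapse; $K$ collapses on $L$ if $L$ is obtained by a finite sequence of elementary collapses. *)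

(* Defs.v *)
From mathcomp Require Import all_boot.
Set Implicit Arguments. Unset Strict Implicit. Unset Printing Implicit Defensive.

(* Simplices are finite sets of vertices of a finite vertex type V;
   a complex is a family K : {set {set V}}.  dim s = #|s| - 1. *)

Section Complexes.
Variable V : finType.
Implicit Types (K L : {set {set V}}) (s t : {set V}).

Definition is_complex K : Prop :=
  set0 \in K /\ forall s t, s \in K -> t \subset s -> t \in K.

(* any set of vertices pairwise joined by edges is a simplex
   (taking x = y also forces every vertex to be a vertex of K) *)
Definition flag K : Prop :=
  forall s, (forall x y, x \in s -> y \in s -> [set x; y] \in K) -> s \in K.

Definition facet t s : bool := (t \subset s) && (#|t|.+1 == #|s|).

Definition strict_total_order K (succ : rel {set V}) : Prop :=
  [/\ ({in K, forall s, ~~ succ s s}),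
      (forall s t u, s \in K -> t \in K -> u \in K ->
         succ s t -> succ t u -> succ s u) &
      ({in K &, forall s t, s != t -> succ s t || succ t s})].

Definition mu (succ : rel {set V}) s : {set V} :=
  odflt set0 [pick t | facet t s &&
     [forall t', facet t' s ==> (t' == t) || succ t t']].

Definition hereditary K (succ : rel {set V}) : Prop :=
  {in K &, forall s t, #|t| < #|s| -> succ s t} /\
  {in K &, forall s t, s != set0 -> t != set0 ->
      succ (mu succ s) (mu succ t) -> succ s t}.

Definition free_pair K s t : Prop :=
  [/\ s \in K, t \in K, t != set0, facet t s &
      is_complex (K :\ s :\ t)].

Inductive collapses K : {set {set V}} -> Prop :=
  | collapses_refl : collapses K K
  | collapses_step L s t :
      collapses K L -> free_pair L s t -> collapses K (L :\ s :\ t).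

End Complexes.

(* Main.v *)
Require Import Defs.
From mathcomp Require Import all_boot.
Set Implicit Arguments. Unset Strict Implicit. Unset Printing Implicit Defensive.

Section Gen.
Variable V : finType.
Implicit Types (K L : {set {set V}}) (s t : {set V}).

Lemma collapses_trans K L M : collapses K L -> collapses L M -> collapses K M.
Proof.
move=> HKL; elim=> [|M' s t _ IH Hf]; first by [].
exact: collapses_step IH Hf.
Qed.

Lemma complex_diff L (I : {set {set V}}) : is_complex L -> set0 \notin I ->
  (forall Z X, Z \in L -> X \in I -> X \subset Z -> Z \in I) ->
  is_complex (L :\: I).
Proof.
move=> [H0 Hs] HI Hup; split; first by rewrite inE HI H0.
move=> s t; rewrite !inE => /andP [sI sL] ts; rewrite (Hs s t sL ts) andbT.
by apply/negP => tI; rewrite (Hup s t sL tI ts) in sI.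
Qed.

Lemma exists_max K (R : rel {set V}) :
  (forall s t u, s \in K -> t \in K -> u \in K -> R s t -> R t u -> R s u) ->
  {in K &, forall s t, s != t -> R s t || R t s} ->
  forall A : {set {set V}}, A \subset K -> A != set0 ->
  exists2 m, m \in A & forall a, a \in A -> (a == m) || R m a.
Proof.
move=> Htr Htot A; have [n] := ubnP #|A|; elim: n A => // n IH A szA AK /set0Pn [x xA].
have xK : x \in K by apply: (subsetP AK).
case: (eqVneq (A :\ x) set0) => [A0|A0].
  exists x => // a aA; case: (eqVneq a x) => [//|ax].
  have : a \in A :\ x by rewrite !inE ax aA.
  by rewrite A0 !inE.
have [|||m mA Hm] := IH (A :\ x).
- by move: szA; rewrite (cardsD1 x A) xA.
- by apply: subset_trans AK; apply: subsetDl.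
- by [].
have mK : m \in K by apply: (subsetP AK); move: mA; rewrite !inE => /andP[].
have mx : m != x by move: mA; rewrite !inE => /andP[].
case Rxm: (R x m).
  exists x => // a aA; case: (eqVneq a x) => [-> //|ax]; apply/orP; right.
  have aA' : a \in A :\ x by rewrite !inE ax.
  have aK : a \in K by apply: (subsetP AK).
  by case/orP: (Hm a aA') => [/eqP ->//|Rma]; apply: Htr Rxm Rma.
have Rmx : R m x by move: (Htot m x mK xK mx); rewrite Rxm orbF.
exists m; first by move: mA; rewrite !inE => /andP[].
move=> a aA; case: (eqVneq a x) => [->|ax]; first by rewrite Rmx orbT.
by apply: Hm; rewrite !inE ax.
Qed.

Implicit Types (B W X Z : {set V}) (u x : V).
Definition Ival (B W : {set V}) := [set X : {set V} | (B \subset X) && (X \subset B :|: W)].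

Lemma in_Ival B W X : (X \in Ival B W) = (B \subset X) && (X \subset B :|: W).
Proof. by rewrite inE. Qed.

Lemma Ival1 B (u : V) : u \notin B -> Ival B [set u] = [set B; u |: B].
Proof.
move=> uB; apply/setP => X; rewrite in_Ival !inE; apply/idP/idP.
  case/andP => BX XBu; case: (boolP (u \in X)) => uX.
    apply/orP; right; rewrite eqEsubset subUset sub1set uX BX andbT.
    by rewrite andbT setUC.
  apply/orP; left; rewrite eqEsubset BX andbT; apply/subsetP => x xX.
  move: (subsetP XBu x xX); rewrite !inE => /orP[//|/eqP ex].
  by move: xX; rewrite ex (negbTE uX).
case/orP => /eqP ->; first by rewrite subxx subsetUl.
by rewrite subsetUr setUC subxx.
Qed.

Lemma Ival_split B W (u : V) : u \in W -> u \notin B ->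
  Ival B W = Ival (u |: B) (W :\ u) :|: Ival B (W :\ u).
Proof.
move=> uW uB; apply/setP => X; rewrite !inE; apply/idP/idP.
  case/andP => BX XBW; case: (boolP (u \in X)) => uX.
    apply/orP; left; rewrite subUset sub1set uX BX /=.
    apply/subsetP => x xX; move: (subsetP XBW x xX); rewrite !inE.
    by case: (eqVneq x u) => //= _; rewrite orbF.
  apply/orP; right; rewrite BX /=; apply/subsetP => x xX.
  move: (subsetP XBW x xX); rewrite !inE.
  case: (eqVneq x u) => [ex|//]; by move: xX; rewrite ex (negbTE uX).
case/orP => /andP[h1 h2].
  rewrite (subset_trans (subsetUr _ _) h1) /=; apply/subsetP => x xX.
  move: (subsetP h2 x xX); rewrite !inE.
  by case/orP => [/orP[/eqP->|->]|/andP[_ ->]]; rewrite ?uW ?orbT.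
rewrite h1 /=; apply/subsetP => x xX.
move: (subsetP h2 x xX); rewrite !inE.
by case/orP => [->|/andP[_ ->]]; rewrite ?orbT.
Qed.

Lemma ival_collapse n : forall L B W, #|W| = n.+1 ->
  (forall u, u \in W -> u \notin B) -> B != set0 -> is_complex L ->
  Ival B W \subset L ->
  (forall Z X, Z \in L -> X \in Ival B W -> X \subset Z -> Z \in Ival B W) ->
  collapses L (L :\: Ival B W).
Proof.
elim: n => [|n IH] L B W cW WB B0 LC IL up.
  have [u eW] : exists u, W = [set u] by apply/cards1P; rewrite cW.
  have uB : u \notin B by apply: WB; rewrite eW set11.
  have eI : Ival B W = [set B; u |: B] by rewrite eW Ival1.
  have eL : L :\: Ival B W = L :\ (u |: B) :\ B.
    by apply/setP => X; rewrite eI !inE negb_or; case: (X == B); case: (X == u |: B);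
       rewrite ?andbF ?andbT.
  rewrite eL; apply: collapses_step; first exact: collapses_refl.
  have BI : B \in Ival B W by rewrite eI !inE eqxx.
  have uBI : u |: B \in Ival B W by rewrite eI !inE eqxx orbT.
  split.
  - exact: (subsetP IL).
  - exact: (subsetP IL).
  - exact: B0.
  - by rewrite /facet subsetUr cardsU1 uB add1n eqxx.
  - rewrite -eL; apply: complex_diff => //.
    by rewrite in_Ival subset0 (negbTE B0).
have : 0 < #|W| by rewrite cW.
rewrite card_gt0 => /set0Pn [u uW].
have uB := WB u uW.
set W' := W :\ u; set B1 := u |: B.
have cW' : #|W'| = n.+1 by move: cW; rewrite (cardsD1 u W) uW add1n => -[].
have uW' : u \notin W' by rewrite !inE eqxx.
have eI := Ival_split uW uB.
have I1 : Ival B1 W' \subset Ival B W by rewrite eI subsetUl.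
have I2 : Ival B W' \subset Ival B W by rewrite eI subsetUr.
have up1 : forall Z X, Z \in L -> X \in Ival B1 W' -> X \subset Z -> Z \in Ival B1 W'.
  move=> Z X ZL XI XZ; have := up Z X ZL (subsetP I1 X XI) XZ.
  rewrite !in_Ival => /andP[_ ZBW]; move: XI; rewrite in_Ival => /andP[B1X _].
  rewrite (subset_trans B1X XZ) /=; apply/subsetP => x xZ.
  move: (subsetP ZBW x xZ); rewrite !inE.
  by case: (eqVneq x u) => //= _; rewrite orbF.
have B1n : set0 \notin Ival B1 W'.
  by rewrite in_Ival subset0; apply/negP => /andP[/eqP h _]; move: (setU11 u B); rewrite -/B1 h inE.
have W'B1 : forall x, x \in W' -> x \notin B1.
  move=> x; rewrite !inE => /andP[xu xW]; rewrite negb_or xu /=; exact: WB.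
have B10 : B1 != set0 by apply/set0Pn; exists u; rewrite !inE eqxx.
have C1 := IH L B1 W' cW' W'B1 B10 LC (subset_trans I1 IL) up1.
set L1 := L :\: Ival B1 W'.
have L1C : is_complex L1 by apply: complex_diff.
have W'B : forall x, x \in W' -> x \notin B.
  by move=> x; rewrite !inE => /andP[_ xW]; exact: WB.
have IL1 : Ival B W' \subset L1.
  apply/subsetP => X XI; rewrite inE (subsetP IL X (subsetP I2 X XI)) andbT.
  move: XI; rewrite !in_Ival => /andP[_ XBW']; apply/negP => /andP[B1X _].
  have : u \in B :|: W' by apply: (subsetP XBW'); apply: (subsetP B1X); rewrite !inE eqxx.
  by rewrite inE (negbTE uB) (negbTE uW').
have up2 : forall Z X, Z \in L1 -> X \in Ival B W' -> X \subset Z -> Z \in Ival B W'.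
  move=> Z X; rewrite inE => /andP[ZI1 ZL] XI XZ.
  have := up Z X ZL (subsetP I2 X XI) XZ.
  rewrite !in_Ival => /andP[BZ ZBW]; rewrite BZ /=.
  case: (boolP (u \in Z)) => uZ.
    have : Z \in Ival B1 W'.
      rewrite in_Ival subUset sub1set uZ BZ /=; apply/subsetP => x xZ.
      move: (subsetP ZBW x xZ); rewrite !inE.
      by case: (eqVneq x u) => //= _; rewrite orbF.
    by rewrite (negbTE ZI1).
  apply/subsetP => x xZ; move: (subsetP ZBW x xZ); rewrite !inE.
  case: (eqVneq x u) => [ex|//]; by move: xZ; rewrite ex (negbTE uZ).
have C2 := IH L1 B W' cW' W'B B0 L1C IL1 up2.
have eL : L1 :\: Ival B W' = L :\: Ival B W by rewrite /L1 setDDl -eI.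
rewrite -eL; exact: collapses_trans C1 C2.
Qed.
End Gen.

Section Main.
Variables (V : finType) (K : {set {set V}}) (succ : rel {set V}) (r : nat).
Hypothesis HK : is_complex K.
Hypothesis Hord : strict_total_order K succ.
Hypothesis Hher : hereditary K succ.
Hypothesis Hflag : flag K.
Hypothesis Hr : 0 < r.
Hypothesis Hhyp : forall s t, s \in K -> t \in K -> #|s| = r.+1 -> #|t| = r.+1 ->
     mu succ s = mu succ t -> s :|: t \in K.
Local Notation mu' := (mu succ).
Implicit Types (s t : {set V}) (u : V).

Lemma subK s t : s \in K -> t \subset s -> t \in K.
Proof. by case: HK => _ H; apply: H. Qed.
Lemma irrK s : s \in K -> ~~ succ s s.
Proof. by case: Hord => H _ _; apply: H. Qed.
Lemma trK s t (w : {set V}) : s \in K -> t \in K -> w \in K -> succ s t -> succ t w -> succ s w.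
Proof. by case: Hord => _ H _; apply: H. Qed.
Lemma totK s t : s \in K -> t \in K -> s != t -> succ s t || succ t s.
Proof. by case: Hord => _ _ H; apply: H. Qed.
Lemma asymK s t : s \in K -> t \in K -> succ s t -> succ t s -> False.
Proof. by move=> sK tK st ts; move: (irrK sK); rewrite (trK sK tK sK st ts). Qed.
Lemma herM s t : s \in K -> t \in K -> s != set0 -> t != set0 ->
  succ (mu' s) (mu' t) -> succ s t.
Proof. by case: Hher => _ H; apply: H. Qed.
Lemma herD s t : s \in K -> t \in K -> #|t| < #|s| -> succ s t.
Proof. by case: Hher => H _; apply: H. Qed.

Lemma mu_spec s : s \in K -> s != set0 ->
  [/\ facet (mu' s) s, mu' s \in K &
      forall t, facet t s -> t = mu' s \/ succ (mu' s) t].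
Proof.
move=> sK s0.
set A := [set t | facet t s].
have AK : A \subset K.
  by apply/subsetP => t; rewrite inE => /andP[ts _]; apply: subK ts.
have A0 : A != set0.
  case/set0Pn: s0 => x xs; apply/set0Pn; exists (s :\ x).
  by rewrite inE /facet subD1set (cardsD1 x s) xs add1n eqxx.
have [m mA Hm] := exists_max trK totK AK A0.
have Hpm : facet m s && [forall t', facet t' s ==> (t' == m) || succ m t'].
  move: (mA); rewrite inE => ->; apply/forallP => t'; apply/implyP => ft.
  by apply: Hm; rewrite inE.
rewrite /mu; case: pickP => [t /andP[ft /forallP Ht] | H]; last by rewrite H in Hpm.
have tK : t \in K by move: ft => /andP[ts _]; apply: subK ts.
split => // t' ft'; move: (Ht t'); rewrite ft' /= => /orP[/eqP -> |]; by [left|right].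
Qed.


Lemma mu_le s t : s \in K -> t \in K -> s != set0 -> t != set0 ->
  succ s t -> mu' s = mu' t \/ succ (mu' s) (mu' t).
Proof.
move=> sK tK s0 t0 st; case: (eqVneq (mu' s) (mu' t)) => [->|ne]; first by left.
have [_ msK _] := mu_spec sK s0; have [_ mtK _] := mu_spec tK t0.
case/orP: (totK msK mtK ne) => [h|h]; first by right.
by case: (asymK sK tK st (herM tK sK t0 s0 h)).
Qed.

Lemma facet_add u t : u \notin t -> facet t (u |: t).
Proof. by move=> ut; rewrite /facet subsetUr cardsU1 ut add1n eqxx. Qed.

Lemma facet_inv t s : facet t s -> exists2 u, u \notin t & s = u |: t.
Proof.
case/andP=> ts /eqP cs.
have : #|s :\: t| != 0.
  by rewrite cardsD (setIidPr ts) -cs subSnn.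
rewrite cards_eq0 => /set0Pn [u]; rewrite inE => /andP[ut us].
exists u => //; apply/eqP; rewrite eq_sym eqEcard.
by rewrite subUset sub1set us ts cardsU1 ut -cs /= add1n leqnn.
Qed.

Lemma set0_card s : #|s| > 0 -> s != set0.
Proof. by move=> h; apply/set0Pn; move: h; rewrite card_gt0 => /set0Pn. Qed.

Lemma descend1 Y u : Y \in K -> Y != set0 -> u \notin Y -> u |: Y \in K ->
  mu' (u |: Y) = Y -> mu' (u |: mu' Y) = mu' Y.
Proof.
move=> YK Y0 uY uYK muY.
have [fY' Y'K _] := mu_spec YK Y0.
have Y'Y : mu' Y \subset Y by case/andP: fY'.
have uY' : u \notin mu' Y by apply: contra uY; apply: (subsetP Y'Y).
set X := u |: mu' Y.
have XK : X \in K by apply: (subK uYK); rewrite /X; apply: setUS.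
have X0 : X != set0 by apply/set0Pn; exists u; rewrite !inE eqxx.
have [fX mXK HX] := mu_spec XK X0.
case: (HX (mu' Y) (facet_add uY')) => [<-//|h].
have uY0 : u |: Y != set0 by apply/set0Pn; exists u; rewrite !inE eqxx.
have [_ _ HuY] := mu_spec uYK uY0.
have fXuY : facet X (u |: Y).
  rewrite /facet setUS //= !cardsU1 uY uY' /=.
  by case/andP: fY' => _ /eqP <-; rewrite add1n.
case: (HuY X fXuY) => [XY|sYX].
  by move: uY; rewrite -muY -XY !inE eqxx.
rewrite muY in sYX.
case: (mu_le YK XK Y0 X0 sYX) => [e|h2]; first by rewrite e.
by case: (asymK Y'K mXK h2 h).
Qed.


Definition goodU (A : {set V}) (U : {set V}) :=
  forall u, u \in U -> [/\ u \notin A, u |: A \in K & mu' (u |: A) = A].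

Lemma chainC m : forall A U, A \in K -> #|A| = m -> goodU A U ->
  forall G, G \in K -> #|G| = m -> G \subset A :|: U -> G != A -> succ A G.
Proof.
elim: m => [|m IH] A U AK cA hU G GK cG GAU GA.
  by move: GA; rewrite (cards0_eq cA) (cards0_eq cG) eqxx.
have A0 : A != set0 by apply: set0_card; rewrite cA.
have G0 : G != set0 by apply: set0_card; rewrite cG.
have [fA' A'K _] := mu_spec AK A0.
have [z zA' eA] := facet_inv fA'.
have cA' : #|mu' A| = m by move: fA' => /andP[_ /eqP]; rewrite cA => -[].
have A'A : mu' A \subset A by case/andP: fA'.
have hU' : goodU (mu' A) (z |: U).
  move=> u; rewrite !inE => /orP[/eqP ->|uU].
    by rewrite -eA AK zA'.
  have [uA uAK muA] := hU u uU.
  split.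
  - by apply: contra uA; apply: (subsetP A'A).
  - by apply: (subK uAK); apply: setUS.
  - exact: descend1.
have [fM MK HM] := mu_spec GK G0.
have MG : mu' G \subset G by case/andP: fM.
have cM : #|mu' G| = m by move: fM => /andP[_ /eqP]; rewrite cG => -[].
case: (eqVneq (mu' G) (mu' A)) => [MA|MA].
  have : ~~ (G \subset A).
    apply: contra GA => GA'; rewrite eqEcard GA' cA cG leqnn //.
  case/subsetPn => g gG gA.
  have gU : g \in U by move: (subsetP GAU g gG); rewrite inE (negbTE gA).
  have [_ gAK mugA] := hU g gU.
  have [g' g'M eG] := facet_inv fM.
  have gg' : g = g'.
    move: gG; rewrite eG inE => /orP[/set1P //|].
    by rewrite MA => h; move: gA; rewrite (subsetP A'A g h).
  have gA0 : g |: A != set0 by apply/set0Pn; exists g; rewrite !inE eqxx.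
  have [_ _ Hg] := mu_spec gAK gA0.
  have fG : facet G (g |: A).
    rewrite /facet eG -gg' MA setUS //= !cardsU1 gA.
    have -> : g \notin mu' A by apply: contra gA; apply: (subsetP A'A).
    by rewrite cA' cA.
  case: (Hg G fG) => [e|]; first by rewrite e mugA eqxx in GA.
  by rewrite mugA.
apply: herM => //.
apply: (IH (mu' A) (z |: U)) => //.
apply: (subset_trans MG); apply: (subset_trans GAU).
rewrite {1}eA; apply/subsetP => x; rewrite !inE.
by case/orP => [/orP[->|->]|->]; rewrite ?orbT.
Qed.




Lemma chainH rho U : rho \in K -> goodU rho U -> forall k A B,
  A \in K -> B \in K -> #|A| = k -> #|B| = k ->
  A \subset rho :|: U -> B \subset rho :|: U -> rho \subset B ->
  ~~ (rho \subset A) -> succ B A.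
Proof.
move=> rK hU; elim=> [|k IH] A B AK BK cA cB AU BU rB rA.
  by move: rB; rewrite (cards0_eq cB) subset0 => /eqP r0; rewrite r0 sub0set in rA.
case: (eqVneq B rho) => [eB|nB].
  rewrite eB; apply: (chainC rK (erefl _) hU) => //.
  - by rewrite cA -cB eB.
  - by apply: contra rA => /eqP ->.
have : ~~ (B \subset rho) by apply: contra nB => Br; rewrite eqEsubset Br rB.
case/subsetPn => s sB sr.
have rB' : rho \subset B :\ s.
  apply/subsetP => x xr; rewrite !inE (subsetP rB x xr) andbT.
  by apply: contra sr => /eqP <-.
have B'K : B :\ s \in K by apply: (subK BK); apply: subD1set.
have cB' : #|B :\ s| = k by move: cB; rewrite (cardsD1 s B) sB add1n => -[].
have B0 : B != set0 by apply: set0_card; rewrite cB.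
have A0 : A != set0 by apply: set0_card; rewrite cA.
have [fM MK HM] := mu_spec BK B0.
have cM : #|mu' B| = k by move: fM => /andP[_ /eqP]; rewrite cB => -[].
have MB : mu' B \subset B by case/andP: fM.
have rM : rho \subset mu' B.
  apply/negPn/negP => rM.
  have h1 := IH _ _ MK B'K cM cB' (subset_trans MB BU)
     (subset_trans (subD1set _ _) BU) rB' rM.
  have fB' : facet (B :\ s) B by rewrite /facet subD1set cB' cB eqxx.
  case: (HM _ fB') => [e|h2]; first by move: rM; rewrite -e rB'.
  by case: (asymK MK B'K h2 h1).
have [fMA MAK _] := mu_spec AK A0.
have MAA : mu' A \subset A by case/andP: fMA.
have cMA : #|mu' A| = k by move: fMA => /andP[_ /eqP]; rewrite cA => -[].
apply: herM => //; apply: IH => //.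
- exact: subset_trans MAA AU.
- exact: subset_trans MB BU.
- by apply: contra rA => h; apply: subset_trans h MAA.
Qed.

Lemma mu_keep rho U B : rho \in K -> goodU rho U -> B \in K ->
  rho \subset B -> B \subset rho :|: U -> B != rho -> rho \subset mu' B.
Proof.
move=> rK hU BK rB BU nB.
have : ~~ (B \subset rho) by apply: contra nB => Br; rewrite eqEsubset Br rB.
case/subsetPn => s sB sr.
have rB' : rho \subset B :\ s.
  apply/subsetP => x xr; rewrite !inE (subsetP rB x xr) andbT.
  by apply: contra sr => /eqP <-.
have B'K : B :\ s \in K by apply: (subK BK); apply: subD1set.
have B0 : B != set0 by apply/set0Pn; exists s.
have [fM MK HM] := mu_spec BK B0.
have cM : #|mu' B| = #|B :\ s|.
  by move: fM => /andP[_ /eqP]; rewrite (cardsD1 s B) sB add1n => -[].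
have MB : mu' B \subset B by case/andP: fM.
apply/negPn/negP => rM.
have h1 := chainH rK hU MK B'K cM (erefl _) (subset_trans MB BU)
     (subset_trans (subD1set _ _) BU) rB' rM.
have fB' : facet (B :\ s) B by rewrite /facet subD1set (cardsD1 s B) sB add1n eqxx.
case: (HM _ fB') => [e|h2]; first by move: rM; rewrite -e rB'.
by case: (asymK MK B'K h2 h1).
Qed.


Implicit Types (rho M Z X : {set V}).
Definition Wset rho := [set v | (v \notin rho) && (v |: rho \in K) && (mu' (v |: rho) == rho)].
Lemma goodW rho : goodU rho (Wset rho).
Proof. by move=> u; rewrite inE => /andP[/andP[a b] /eqP c]. Qed.
Arguments goodW : clear implicits.
Definition Ir rho := Ival rho (Wset rho).

Lemma descendD rho : rho \in K -> forall k M u, #|M| = k + #|rho| -> M \in K ->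
  rho \subset M -> M \subset rho :|: Wset rho -> u \notin M -> u |: M \in K ->
  mu' (u |: M) = M -> mu' (u |: rho) = rho.
Proof.
move=> rK; elim=> [|k IH] M u cM MK rM MW uM uMK muM.
  have /eqP e : rho == M by rewrite eqEcard rM cM add0n leqnn.
  by rewrite e.
have nM : M != rho by apply/eqP => e; move: cM; rewrite e addSn => cM; have := leq_addl k #|rho|; rewrite -ltnS -cM ltnn.
have M0 : M != set0 by apply: set0_card; rewrite cM.
have rM' := mu_keep rK (goodW rho) MK rM MW nM.
have [fM M'K _] := mu_spec MK M0.
have M'M : mu' M \subset M by case/andP: fM.
have cM' : #|mu' M| = k + #|rho| by move: fM => /andP[_ /eqP]; rewrite cM addSn => -[].
apply: (IH (mu' M) u) => //.
- exact: subset_trans M'M MW.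
- by apply: contra uM; apply: (subsetP M'M).
- by apply: (subK uMK); apply: setUS.
- exact: descend1.
Qed.

Lemma key_exist j : forall Z, Z \in K -> #|Z| = r + j ->
  exists rho, [/\ rho \in K, #|rho| = r & Z \in Ir rho].
Proof.
elim: j => [|j IH] Z ZK cZ.
  by exists Z; split => //; [rewrite cZ addn0 | rewrite /Ir in_Ival subxx subsetUl].
have Z0 : Z != set0 by apply: set0_card; rewrite cZ addnS.
have [fM MK _] := mu_spec ZK Z0.
have cM : #|mu' Z| = r + j by move: fM => /andP[_ /eqP]; rewrite cZ addnS => -[].
have [rho [rK cr]] := IH _ MK cM.
rewrite /Ir in_Ival => /andP[rM MW].
have [u uM eZ] := facet_inv fM.
have ur : u \notin rho by apply: contra uM; apply: (subsetP rM).
have urK : u |: rho \in K by apply: (subK ZK); rewrite eZ; apply: setUS.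
have mur : mu' (u |: rho) = rho.
  apply: (@descendD rho rK j (mu' Z) u) => //.
  - by rewrite cM cr addnC.
  - by rewrite -eZ.
  - by rewrite -eZ.
exists rho; split => //; rewrite /Ir in_Ival eZ.
rewrite (subset_trans rM (subsetUr _ _)) /= subUset MW andbT sub1set !inE.
by rewrite ur urK mur eqxx orbT.
Qed.

Lemma key_order rho rho' Z : rho \in K -> rho' \in K -> #|rho| = #|rho'| ->
  Z \in Ir rho' -> rho \subset Z -> rho = rho' \/ succ rho' rho.
Proof.
move=> rK r'K cr; rewrite /Ir in_Ival => /andP[_ ZW] rZ.
case: (eqVneq rho rho') => [e|ne]; first by left.
by right; apply: (chainC r'K (erefl _) (goodW rho') rK cr (subset_trans rZ ZW) ne).
Qed.

Lemma Ir_sub_K rho : rho \in K -> #|rho| = r -> Ir rho \subset K.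
Proof.
move=> rK cr.
have WK : rho :|: Wset rho \in K.
  apply: Hflag => x y; rewrite !in_setU.
  have cov : forall z, z \in Wset rho -> [/\ z |: rho \in K, #|z |: rho| = r.+1 & mu' (z |: rho) = rho].
    move=> z; rewrite inE => /andP[/andP[zr zK] /eqP zm].
    by rewrite cardsU1 zr cr add1n.
  case/orP=> [xr|xW]; case/orP=> [yr|yW].
  - apply: (subK rK); apply/subsetP => z; rewrite !inE.
    by case/orP=> /eqP ->.
  - have [yK _ _] := cov y yW; apply: (subK yK); apply/subsetP => z; rewrite !inE.
    by case/orP=> /eqP ->; rewrite ?eqxx ?xr ?orbT.
  - have [xK _ _] := cov x xW; apply: (subK xK); apply/subsetP => z; rewrite !inE.
    by case/orP=> /eqP ->; rewrite ?eqxx ?yr ?orbT.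
  - have [xK cx mx] := cov x xW; have [yK cy my] := cov y yW.
    have := Hhyp xK yK cx cy; rewrite mx my => /(_ erefl) h.
    apply: (subK h); apply/subsetP => z; rewrite !inE.
    by case/orP=> /eqP ->; rewrite eqxx ?orbT.
apply/subsetP => X; rewrite /Ir in_Ival => /andP[_ XW]; exact: subK WK XW.
Qed.


Definition Tp : {set {set V}} := [set rho in K | (#|rho| == r) && (Wset rho != set0)].
Definition UD (D : {set {set V}}) := \bigcup_(rho in D) Ir rho.
Definition upper (D : {set {set V}}) := forall rho rho', rho \in D -> rho' \in Tp ->
  succ rho' rho -> rho' \in D.

Lemma TpP rho : rho \in Tp -> [/\ rho \in K, #|rho| = r & Wset rho != set0].
Proof. by rewrite inE => /andP[a /andP[/eqP b c]]. Qed.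

Lemma UP rho Z : rho \in K -> #|rho| = r -> Z \in K -> rho \subset Z ->
  exists rho', Z \in Ir rho' /\ (rho' = rho \/ (rho' \in Tp /\ succ rho' rho)).
Proof.
move=> rK cr ZK rZ.
have cZ : #|Z| = r + (#|Z| - r) by rewrite subnKC // -cr subset_leq_card.
have [rho' [r'K cr' ZI]] := key_exist ZK cZ.
exists rho'; split => //.
case: (key_order rK r'K (etrans cr (esym cr')) ZI rZ) => [e|h]; first by left.
right; split => //; rewrite inE r'K cr' eqxx /=.
apply/negP => /eqP W0; move: ZI; rewrite /Ir in_Ival W0 setU0 => /andP[_ Zr'].
have /eqP e : rho == rho' by rewrite eqEcard (subset_trans rZ Zr') cr cr' leqnn.
by move: (irrK rK); rewrite {1}e h.
Qed.

Lemma uniq_base rho rho' X : rho \in K -> rho' \in K -> #|rho| = r -> #|rho'| = r ->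
  X \in Ir rho -> X \in Ir rho' -> rho = rho'.
Proof.
move=> rK r'K cr cr' X1 X2.
have rX : rho \subset X by move: X1; rewrite /Ir in_Ival => /andP[].
have r'X : rho' \subset X by move: X2; rewrite /Ir in_Ival => /andP[].
case: (key_order rK r'K (etrans cr (esym cr')) X2 rX) => // h1.
case: (key_order r'K rK (etrans cr' (esym cr)) X1 r'X) => [//|h2].
by case: (asymK rK r'K h2 h1).
Qed.

Lemma trK' s t (w : {set V}) : s \in K -> t \in K -> w \in K -> succ t s -> succ w t -> succ w s.
Proof. by move=> sK tK wK h1 h2; apply: (trK wK tK sK h2 h1). Qed.
Lemma totK' : {in K &, forall s t, s != t -> succ t s || succ s t}.
Proof. by move=> s t sK tK ne; rewrite orbC; apply: totK. Qed.

Lemma main_ind n : forall D : {set {set V}}, #|D| = n -> D \subset Tp -> upper D ->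
  collapses K (K :\: UD D).
Proof.
elim: n => [|n IH] D cD DT uD.
  by rewrite /UD (cards0_eq cD) big_set0 setD0; exact: collapses_refl.
have DK : D \subset K.
  by apply/subsetP => x /(subsetP DT) /TpP[].
have D0 : D != set0 by rewrite -cards_eq0 cD.
have [rho0 r0D Hmin] := exists_max (R := fun a b => succ b a) trK' totK' DK D0.
have [r0K cr0 W0] := TpP (subsetP DT _ r0D).
set D' := D :\ rho0.
have cD' : #|D'| = n by move: cD; rewrite (cardsD1 rho0 D) r0D add1n => -[].
have D'T : D' \subset Tp by apply: subset_trans DT; apply: subD1set.
have uD' : upper D'.
  move=> rho rho'; rewrite !in_setD1 => /andP[nr rD] r'T h; rewrite (uD rho rho' rD r'T h) andbT.
  apply/eqP => e; rewrite e in h.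
  have [rK _ _] := TpP (subsetP DT _ rD).
  case/orP: (Hmin rho rD) => [/eqP e2|h2]; first by rewrite e2 eqxx in nr.
  by case: (asymK r0K rK h h2).
have C1 := IH D' cD' D'T uD'.
set L := K :\: UD D'.
have memUD : forall X E, (X \in UD E) = [exists rho in E, X \in Ir rho].
  move=> X E; apply/bigcupP/existsP => [[rho rE XI]|[rho /andP[rE XI]]]; exists rho => //.
  by rewrite rE.
have LC : is_complex L.
  apply: complex_diff => //.
    rewrite memUD; apply/existsP => -[rho /andP[rD XI]].
    have [_ cr _] := TpP (subsetP D'T _ rD).
    move: XI; rewrite /Ir in_Ival subset0 => /andP[/eqP r0 _].
    by move: Hr; rewrite -cr r0 cards0.
  move=> Z X ZK; rewrite !memUD => /existsP[rho /andP[rD XI]] XZ.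
  have [rK cr _] := TpP (subsetP D'T _ rD).
  have rZ : rho \subset Z by move: XI; rewrite /Ir in_Ival => /andP[h _]; exact: subset_trans h XZ.
  have [rho' [ZI [e|[r'T h]]]] := UP rK cr ZK rZ; apply/existsP; exists rho'.
    by rewrite ZI andbT e.
  by rewrite ZI andbT; apply: uD' h.
have IL : Ir rho0 \subset L.
  apply/subsetP => X XI; rewrite inE (subsetP (Ir_sub_K r0K cr0) X XI) andbT memUD.
  apply/existsP => -[rho /andP[rD XI']].
  have [rK cr _] := TpP (subsetP D'T _ rD).
  have e := uniq_base rK r0K cr cr0 XI' XI.
  by move: rD; rewrite e in_setD1 eqxx.
have upL : forall Z X, Z \in L -> X \in Ir rho0 -> X \subset Z -> Z \in Ir rho0.
  move=> Z X; rewrite inE => /andP[ZU ZK] XI XZ.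
  have rZ : rho0 \subset Z by move: XI; rewrite /Ir in_Ival => /andP[h _]; exact: subset_trans h XZ.
  have [rho' [ZI [<-//|[r'T h]]]] := UP r0K cr0 ZK rZ.
  have r'D := uD _ _ r0D r'T h.
  have r'D' : rho' \in D'.
    rewrite in_setD1 r'D andbT; apply/eqP => e; rewrite e in h.
    by move: (irrK r0K); rewrite h.
  by move: ZU; rewrite memUD; case/existsP; exists rho'; rewrite r'D' ZI.
have cW : #|Wset rho0| = (#|Wset rho0|).-1.+1 by rewrite prednK // card_gt0.
have WB : forall x, x \in Wset rho0 -> x \notin rho0.
  by move=> x /(goodW rho0) [].
have r00 : rho0 != set0 by apply: set0_card; rewrite cr0.
have C2 := ival_collapse cW WB r00 LC IL upL.
have eL : L :\: Ival rho0 (Wset rho0) = K :\: UD D.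
  by rewrite /L setDDl /UD (big_setD1 _ r0D) /= setUC.
rewrite -eL; exact: collapses_trans C1 C2.
Qed.

Lemma main_result : exists L, collapses K L /\ (forall s, s \in L -> #|s| <= r).
Proof.
exists (K :\: UD Tp); split.
  by apply: (main_ind (erefl _)) => // rho rho' _ h _.
move=> s; rewrite inE => /andP[sU sK]; rewrite leqNgt; apply/negP => rs.
have cs : #|s| = r + (#|s| - r) by rewrite subnKC // ltnW.
have [rho [rK cr sI]] := key_exist sK cs.
move: sU; rewrite /UD; apply/negP/negPn/bigcupP; exists rho => //.
rewrite inE rK cr eqxx /=; apply/negP => /eqP W0.
move: sI; rewrite /Ir in_Ival W0 setU0 => /andP[_ sr].
by move: rs; rewrite -cr ltnNge subset_leq_card.
Qed.

End Main.

Theorem proposition1 (V : finType) (K : {set {set V}}) (succ : rel {set V})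
  (r : nat) :
  is_complex K -> flag K ->
  strict_total_order K succ -> hereditary K succ ->
  0 < r ->
  (forall s t, s \in K -> t \in K -> #|s| = r.+1 -> #|t| = r.+1 ->
     mu succ s = mu succ t -> s :|: t \in K) ->
  exists L, collapses K L /\ (forall s, s \in L -> #|s| <= r).
Proof.
move=> HK Hf Ho Hh Hr Hy.
exact: (main_result HK Ho Hh Hf Hr Hy).
Qed.
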